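(* Let $\Bbbk$ be an algebraically closed field with $\mathrm{char}(\Bbbk)\neq 2$, let $n\ge1$, and let $\mu=(\mu_{ij})$ with $\mu_{ij}\in\Bbbk^\times$, $\mu_{ij}\mu_{ji}=1$, $\mu_{ii}=1$. Let $\Phi:\mathbb P^{n-1}\times\mathbb P^{n-1}\to\mathbb P(M^\mu(n,\Bbbk))$ be given by $\Phi(a,b)=(a_ib_j+\mu_{ij}a_jb_i)_{i,j=1}^n$ for $a=(a_1,\dots,a_n)$, $b=(b_1,\dots,b_n)$. Then the image of $\Phi$ equals $\{M\in\mathbb P(M^\mu(n,\Bbbk)) : \mu\text{-rank}(M)\le 2\}$.
   Context: $S$ is the $\Bbbk$-algebra on generators $z_1,\dots,z_n$ with relations $z_jz_i=\mu_{ij}z_iz_j$ for all $i,j$. $M^\mu(n,\Bbbk)$ is the vector space of $\mu$-symmetric matrices, i.e. $M\in M(n,\Bbbk)$ with $M_{ij}=\mu_{ij}M_{ji}$ for all $i,j$. The map $\tau:\mathbb P(M^\mu(n,\Bbbk))\to\mathbb P(S_2)$ is $\tau(M)=z^TMz=\sum_{i,j}M_{ij}z_iz_j$ where $z=(z_1,\dots,z_n)^T$. For $Q\in S_2$: $\mu$-rank$(Q)=0$ if $Q=0$; $\mu$-rank$(Q)=1$ if $Q=L^2$ for some nonzero $L\in S_1$; $\mu$-rank$(Q)=2$ if $Q$ is not of the form $L^2$ with $L\in S_1\setminus\{0\}$ but $Q=L_1L_2$ with $L_1,L_2\in S_1\setminus\{0\}$. For $M\in\mathbb P(M^\mu(n,\Bbbk))$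 with $\mu$-rank$(\tau(M))\le2$, $\mu$-rank$(M)$ is defined as $\mu$-rank$(\tau(M))$; thus ''$\mu$-rank$(M)\le 2$'' means $\tau(M)=L_1L_2$ for some nonzero $L_1,L_2\in S_1$. *)

(* Defs.v *)
From HB Require Import structures.
From mathcomp Require Import all_boot all_order all_algebra.
Set Implicit Arguments. Unset Strict Implicit. Unset Printing Implicit Defensive.
Import Order.TTheory GRing.Theory.
Local Open Scope ring_scope.

(* Degree-2 part S_2 of S = k<z_1..z_n>/(z_j z_i - mu_ij z_i z_j), modelled
   via its PBW basis {z_i z_j : i <= j}: an element of S_2 is represented by
   its (upper-triangular) coefficient matrix in that basis. *)

(* Normal form of the formal expression sum_{i,j} c_ij z_i z_j in S_2:
   for i < j, z_j z_i = mu_ij z_i z_j, so the coefficient of z_i z_j is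
   c_ij + mu_ij c_ji. *)
Definition nf2 (K : fieldType) (n : nat) (mu c : 'M[K]_n) : 'M[K]_n :=
  \matrix_(i, j) (if (i < j)%N then c i j + mu i j * c j i
                  else if i == j then c i i else 0).

Definition mu_symmetric (K : fieldType) (n : nat) (mu M : 'M[K]_n) : Prop :=
  forall i j, M i j = mu i j * M j i.

(* tau(M) = z^T M z in S_2 *)
Definition tau (K : fieldType) (n : nat) (mu M : 'M[K]_n) : 'M[K]_n :=
  nf2 mu M.

(* product L1 L2 in S_2 of L1 = sum a_i z_i, L2 = sum b_j z_j in S_1 *)
Definition lin_prod (K : fieldType) (n : nat) (mu : 'M[K]_n) (a b : 'rV[K]_n)
  : 'M[K]_n := nf2 mu (\matrix_(i, j) (a 0 i * b 0 j)).

Definition mu_rank_le2 (K : fieldType) (n : nat) (mu M : 'M[K]_n) : Prop :=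
  exists L1 L2 : 'rV[K]_n, L1 != 0 /\ L2 != 0 /\ tau mu M = lin_prod mu L1 L2.

Definition Phi (K : fieldType) (n : nat) (mu : 'M[K]_n) (a b : 'rV[K]_n)
  : 'M[K]_n := \matrix_(i, j) (a 0 i * b 0 j + mu i j * a 0 j * b 0 i).

(* Main.v *)
Require Import Defs.
From HB Require Import structures.
From mathcomp Require Import all_boot all_order all_algebra.
From mathcomp Require Import ring.
Import GRing.Theory.
Local Open Scope ring_scope.

Theorem proposition2p5 (K : closedFieldType) (n : nat) (mu : 'M[K]_n) :
  (2%:R : K) != 0 ->
  (0 < n)%N ->
  (forall i j, mu i j != 0) ->
  (forall i j, mu i j * mu j i = 1) ->
  (forall i, mu i i = 1) ->
  (* Phi is a well-defined map P^{n-1} x P^{n-1} -> P(M^mu(n,k)) whose image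
     lies in the mu-rank <= 2 locus *)
  (forall a b : 'rV[K]_n, a != 0 -> b != 0 ->
     [/\ Phi mu a b != 0, mu_symmetric mu (Phi mu a b)
       & mu_rank_le2 mu (Phi mu a b)]) /\
  (* every point of P(M^mu(n,k)) of mu-rank <= 2 is in the image *)
  (forall M : 'M[K]_n, M != 0 -> mu_symmetric mu M -> mu_rank_le2 mu M ->
     exists (a b : 'rV[K]_n) (c : K),
       [/\ a != 0, b != 0, c != 0 & M = c *: Phi mu a b]).
Proof.
move=> h2 _ hnz hmu hdiag.
have hinv : forall i j, mu j i = (mu i j)^-1.
  by move=> i j; rewrite -[mu j i](mulKf (hnz i j)) (hmu i j) mulr1.
have psym : forall a b : 'rV[K]_n, mu_symmetric mu (Phi mu a b).
  move=> a b i j; rewrite !mxE (hinv i j); field; exact: hnz.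
have nz : forall a : 'rV[K]_n, a != 0 -> exists i, a 0 i != 0.
  move=> a a0; case: (pickP (fun i => a 0 i != 0)) => [i ai|h]; first by exists i.
  case/eqP: a0; apply/rowP => i; rewrite !mxE; exact/eqP/negbFE/h.
split.
  move=> a b a0 b0; split => //.
  - have [i ai] := nz a a0; have [j bj] := nz b b0.
    have dg : forall k, a 0 k != 0 -> b 0 k != 0 -> Phi mu a b != 0.
      move=> k ak bk; apply/eqP => /matrixP /(_ k k).
      rewrite !mxE hdiag mul1r => /eqP.
      have -> : a 0 k * b 0 k + a 0 k * b 0 k = a 0 k * b 0 k * 2%:R.
        by rewrite mulr_natr mulr2n.
      by apply/negP; rewrite !mulf_neq0.

    case: (eqVneq (a 0 j) 0) => aj; last exact: (dg j).
    apply/eqP => /matrixP /(_ i j).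
    rewrite !mxE aj mulr0 mul0r addr0 => /eqP; apply/negP; by rewrite mulf_neq0.
  - exists (2%:R *: a), b; split; first by rewrite scaler_eq0 negb_or h2.
    split => //.
    apply/matrixP => i j; rewrite /tau /lin_prod /nf2 !mxE.
    case: ifP => ij.
      rewrite (hinv i j); field; exact: hnz.
    case: ifP => // _; rewrite hdiag; ring.
move=> M _ Msym [L1 [L2 [l1 [l2 E]]]].
exists L1, L2, 2%:R^-1; split => //; first by rewrite invr_eq0.
have up : forall i j : 'I_n, (i <= j)%N -> M i j = 2%:R^-1 * Phi mu L1 L2 i j.
  move=> i j; rewrite leq_eqVlt => /orP [/eqP /val_inj <-|ij].
    move/matrixP: (E) => /(_ i i); rewrite /tau /lin_prod /nf2 !mxE ltnn eqxx.
    move=> ->; rewrite hdiag; field; exact: h2.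
  move/matrixP: (E) => /(_ i j); rewrite /tau /lin_prod /nf2 !mxE ij.
  rewrite (Msym j i) mulrA (hmu i j) mul1r => H.
  have -> : L1 0 i * L2 0 j + mu i j * L1 0 j * L2 0 i = M i j + M i j.
    by rewrite H mulrA.
  field; exact: h2.
apply/matrixP => i j; rewrite [RHS]mxE.
case: (leqP i j) => ij; first exact: up.
rewrite Msym up; last exact: ltnW.
by rewrite (psym L1 L2 i j) mulrCA.
Qed.
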